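(* Assume $\rho$ satisfies the Loss Kernel Assumption, let $\xi\ge0$, let $X^{(k)}\in\mathcal X$, and define for $X\in\mathbb R^{d\times(d+1)n}$ $$G(X\mid X^{(k)})=\sum_{\alpha\in\mathcal A}\sum_{(i,j)\in\vec{\mathcal E}^{\alpha\alpha}}F^{\alpha\alpha}_{ij}(X)+\sum_{\alpha\ne\beta}\sum_{(i,j)\in\vec{\mathcal E}^{\alpha\beta}}E^{\alpha\beta}_{ij}(X\mid X^{(k)})+\tfrac{\xi}{2}\|X-X^{(k)}\|^2 .$$ Then there exist positive semidefinite matrices $\Gamma^{\alpha(k)}\in\mathbb R^{(d+1)n_\alpha\times(d+1)n_\alpha}$, $\alpha\in\mathcal A$ (depending on $X^{(k)}$), such that, with $\Gamma^{(k)}=\mathrm{diag}(\Gamma^{1(k)},\dots,\Gamma^{|\mathcal A|(k)})$: (a) $G(X\mid X^{(k)})=\sum_{\alpha\in\mathcal A}G^\alpha(X^\alpha\mid X^{(k)})+F(X^{(k)})$, where $G^\alpha(X^\alpha\mid X^{(k)})=\frac12\|X^\alpha-X^{\alpha(k)}\|^2_{\Gamma^{\alpha(k)}}+\langle\nabla_{X^\alpha}F(X^{(k)}),X^\alpha-X^{\alpha(k)}\rangle$; (b) $G(X\mid X^{(k)})=\frac12\|X-X^{(k)}\|^2_{\Gamma^{(k)}}+\langle\nabla F(X^{(k)}),X-X^{(k)}\rangle+F(X^{(k)})$, and $G(X\mid X^{(k)})\ge F(X)$ for all $X$, with equality if $X=X^{(k)}$; (c) $\Gamma^{(k)}\succeq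 M^{(k)}$; (d) there is a constant PSD matrix $\Gamma\in\mathbb R^{(d+1)n\times(d+1)n}$, independent of $X^{(k)}$, with $\Gamma\succeq\Gamma^{(k)}$ for every $X^{(k)}\in\mathcal X$.
   Context: Setup. Fix an integer $d\ge 2$, a finite set of nodes $\mathcal A=\{1,\dots,|\mathcal A|\}$, positive integers $n_\alpha$ ($\alpha\in\mathcal A$) and $n=\sum_{\alpha}n_\alpha$. An element $X\in\mathbb R^{d\times(d+1)n}$ is written $X=[X^1\ \cdots\ X^{|\mathcal A|}]$ with $X^\alpha=[t^\alpha\ R^\alpha]\in\mathbb R^{d\times(d+1)n_\alpha}$, where $t^\alpha=[t^\alpha_1\ \cdots\ t^\alpha_{n_\alpha}]$ with $t^\alpha_i\in\mathbb R^d$ and $R^\alpha=[R^\alpha_1\ \cdots\ R^\alpha_{n_\alpha}]$ with $R^\alpha_i\in\mathbb R^{d\times d}$; write $X^\alpha_i=[t^\alpha_i\ R^\alpha_i]\in\mathbb R^{d\times(d+1)}$. The feasible set is $\mathcal X=\{X:\ R^\alpha_i\in SO(d)\ \forall\alpha,i\}$; $X^{(k)}=[X^{1(k)}\ \cdots\ X^{|\mathcal A|(k)}]$. We use $\langle A,B\rangle=\mathrm{tr}(AB^\top)$, $\|\cdot\|$ the Frobenius norm, and for PSD $M$, $\|Y\|_M^2=\mathrm{tr}(YMY^\top)$. Data: for each ordered pair $(\alpha,\beta)\in\mathcal A\times\mathcal A$ (including $\alpha=\beta$) a finite set $\vec{\mathcal E}^{\alpha\beta}\subseteq\{1,\dots,n_\alpha\}\times\{1,\dots,n_\beta\}$,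 and for each $(i,j)\in\vec{\mathcal E}^{\alpha\beta}$ a rotation $\tilde R^{\alpha\beta}_{ij}\in SO(d)$, a vector $\tilde t^{\alpha\beta}_{ij}\in\mathbb R^d$ and weights $\kappa^{\alpha\beta}_{ij},\tau^{\alpha\beta}_{ij}\ge0$. For $(i,j)\in\vec{\mathcal E}^{\alpha\beta}$ define the quadratic form on $\mathbb R^{d\times(d+1)n}$ $$q^{\alpha\beta}_{ij}(X)=\kappa^{\alpha\beta}_{ij}\|R^\alpha_i\tilde R^{\alpha\beta}_{ij}-R^\beta_j\|^2+\tau^{\alpha\beta}_{ij}\|R^\alpha_i\tilde t^{\alpha\beta}_{ij}+t^\alpha_i-t^\beta_j\|^2 .$$ Loss Kernel Assumption: $\rho:\mathbb R^+\to\mathbb R$ ($\mathbb R^+=[0,\infty)$) satisfies (a) $\rho(s)\ge0$ with equality iff $s=0$; (b) $\rho$ is continuously differentiable on $\mathbb R^+$; (c) $\rho$ is concave; (d) $0\le\rho'(s)\le1$ for all $s\ge0$ and $\rho'(0)=1$; (e) $\varphi(X)=\rho(\|X\|^2)$ has Lipschitz continuous gradient on $\mathbb R^{m\times n}$. Define $F^{\alpha\alpha}_{ij}(X)=\frac12q^{\alpha\alpha}_{ij}(X)$ for $(i,j)\in\vec{\mathcal E}^{\alpha\alpha}$ and $F^{\alpha\beta}_{ij}(X)=\frac12\rho\big(q^{\alpha\beta}_{ij}(X)\big)$ for $\alpha\ne\beta$, $(i,j)\in\vec{\mathcal E}^{\alpha\beta}$ (defined on all of $\mathbb R^{d\times(d+1)n}$),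 and the objective $$F(X)=\sum_{\alpha\in\mathcal A}\sum_{(i,j)\in\vec{\mathcal E}^{\alpha\alpha}}F^{\alpha\alpha}_{ij}(X)+\sum_{\alpha\ne\beta}\sum_{(i,j)\in\vec{\mathcal E}^{\alpha\beta}}F^{\alpha\beta}_{ij}(X).$$ $\nabla$ denotes the Euclidean gradient and $\nabla_{X^\alpha}$ the partial gradient w.r.t. the block $X^\alpha$. Weights: $\omega^{\alpha\beta(k)}_{ij}=1$ if $\alpha=\beta$ and $\omega^{\alpha\beta(k)}_{ij}=\rho'\big(q^{\alpha\beta}_{ij}(X^{(k)})\big)$ if $\alpha\neq\beta$. Decoupled quadratic form: for $(i,j)\in\vec{\mathcal E}^{\alpha\beta}$, $$p^{\alpha\beta}_{ij}(X)=2\Big(\kappa^{\alpha\beta}_{ij}\|R^\alpha_i\|^2+\kappa^{\alpha\beta}_{ij}\|R^\beta_j\|^2+\tau^{\alpha\beta}_{ij}\|R^\alpha_i\tilde t^{\alpha\beta}_{ij}+t^\alpha_i\|^2+\tau^{\alpha\beta}_{ij}\|t^\beta_j\|^2\Big),$$ and $E^{\alpha\beta}_{ij}(X\mid X^{(k)})=\tfrac12\omega^{\alpha\beta(k)}_{ij}\,p^{\alpha\beta}_{ij}(X-X^{(k)})+\langle\nabla F^{\alpha\beta}_{ij}(X^{(k)}),X-X^{(k)}\rangle+F^{\alpha\beta}_{ij}(X^{(k)})$. The PSD matrix $M^{(k)}\in\mathbb R^{(d+1)n\times(d+1)n}$ is defined by $\|Y\|^2_{M^{(k)}}=\sum_{\alpha}\sum_{(i,j)\in\vec{\mathcal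 E}^{\alpha\alpha}}q^{\alpha\alpha}_{ij}(Y)+\sum_{\alpha\ne\beta}\sum_{(i,j)\in\vec{\mathcal E}^{\alpha\beta}}\omega^{\alpha\beta(k)}_{ij}q^{\alpha\beta}_{ij}(Y)$ for all $Y$. *)

(* Defs.v *)
From HB Require Import structures.
From mathcomp Require Import all_boot all_order all_algebra.
From mathcomp Require Import all_classical all_reals all_analysis.
Unset Printing Implicit Defensive.
Import Order.TTheory GRing.Theory Num.Theory.
Import numFieldNormedType.Exports.
Local Open Scope ring_scope.

Definition minner {R : realType} {m k : nat} (A B : 'M[R]_(m, k)) : R :=
  \tr (A *m B^T).

Definition fnorm2 {R : realType} {m k : nat} (A : 'M[R]_(m, k)) : R := minner A A.
Definition fnorm {R : realType} {m k : nat} (A : 'M[R]_(m, k)) : R :=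
  Num.sqrt (fnorm2 A).

Definition mnorm2 {R : realType} {m k : nat} (M : 'M[R]_k) (Y : 'M[R]_(m, k)) : R :=
  \tr (Y *m M *m Y^T).

Definition psd {R : realType} {k : nat} (M : 'M[R]_k) : Prop :=
  M^T = M /\ forall v : 'rV[R]_k, 0 <= (v *m M *m v^T) 0 0.

Definition rotation {R : realType} {d : nat} (Q : 'M[R]_d) : Prop :=
  Q^T *m Q = 1%:M /\ \det Q = 1.

Definition grad {R : realType} {m k : nat} (f : 'M[R]_(m, k) -> R)
    (X : 'M[R]_(m, k)) : 'M[R]_(m, k) :=
  \matrix_(i, j) derive1 (fun s : R => f (X + s *: delta_mx i j)) 0.

(* ---------- Loss Kernel Assumption ----------
   rho : R^+ -> R is modelled as rho : R -> R (only its values on [0,oo) are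
   ever used); rho' is its derivative on R^+ (one-sided at 0). *)
Definition loss_kernel {R : realType} (rho rho' : R -> R) : Prop :=
  (forall s : R, 0 <= s -> 0 <= rho s) /\
  (forall s, 0 <= s -> (rho s = 0 <-> s = 0)) /\
  (forall s : R, 0 < s -> is_derive s (1 : R) rho (rho' s)) /\
  (((fun h : R => h^-1 * (rho h - rho 0)) @ at_right (0 : R)) --> rho' 0)%classic /\
  {within [set s : R | 0 <= s], continuous rho'}%classic /\
  (forall x y t, 0 <= x -> 0 <= y -> 0 <= t -> t <= 1 ->
     t * rho x + (1 - t) * rho y <= rho (t * x + (1 - t) * y)) /\
  (forall s, 0 <= s -> 0 <= rho' s /\ rho' s <= 1) /\
  rho' 0 = 1 /\
  (forall m k : nat, exists L : R, forall X Y : 'M[R]_(m, k),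
     fnorm (grad (fun Z => rho (fnorm2 Z)) X - grad (fun Z => rho (fnorm2 Z)) Y)
       <= L * fnorm (X - Y)).

(* ---------- block structure ----------
   Node alpha : 'I_A has n alpha poses; X^alpha = [t^alpha R^alpha] has
   n_alpha + n_alpha * d = (d+1) n_alpha columns; X = [X^1 ... X^|A|]. *)
Definition bdim {A : nat} (d : nat) (n : 'I_A -> nat) (a : 'I_A) : nat :=
  (n a + n a * d)%N.

Definition Ntot {A : nat} (d : nat) (n : 'I_A -> nat) : nat :=
  (\sum_(a < A) bdim d n a)%N.

Definition blk {R : realType} {A d : nat} {n : 'I_A -> nat}
    (X : 'M[R]_(d, Ntot d n)) (a : 'I_A) : 'M[R]_(d, bdim d n a) :=
  @submxrow R A (bdim d n) d X a.

Definition tpos {R : realType} {A d : nat} {n : 'I_A -> nat}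
    (X : 'M[R]_(d, Ntot d n)) (a : 'I_A) (i : 'I_(n a)) : 'cV[R]_d :=
  col (lshift (n a * d) i) (blk X a).

Definition Rpos {R : realType} {A d : nat} {n : 'I_A -> nat}
    (X : 'M[R]_(d, Ntot d n)) (a : 'I_A) (i : 'I_(n a)) : 'M[R]_d :=
  \matrix_(r < d, c < d) blk X a r (rshift (n a) (mxvec_index i c)).

Definition feasible {R : realType} {A d : nat} {n : 'I_A -> nat}
    (X : 'M[R]_(d, Ntot d n)) : Prop :=
  forall (a : 'I_A) (i : 'I_(n a)), rotation (Rpos X a i).

Record pgo_data (R : realType) (d A : nat) (n : 'I_A -> nat) := PGOData {
  edges : forall a b : 'I_A, {set 'I_(n a) * 'I_(n b)};
  rotm  : forall a b : 'I_A, 'I_(n a) -> 'I_(n b) -> 'M[R]_d;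
  trv   : forall a b : 'I_A, 'I_(n a) -> 'I_(n b) -> 'cV[R]_d;
  kappa : forall a b : 'I_A, 'I_(n a) -> 'I_(n b) -> R;
  tau   : forall a b : 'I_A, 'I_(n a) -> 'I_(n b) -> R
}.
Arguments edges {R d A n} _ _ _.
Arguments rotm {R d A n} _ _ _ _ _.
Arguments trv {R d A n} _ _ _ _ _.
Arguments kappa {R d A n} _ _ _ _ _.
Arguments tau {R d A n} _ _ _ _ _.


Definition qf {R : realType} {d A : nat} {n : 'I_A -> nat} (D : pgo_data R d A n)
    (a b : 'I_A) (i : 'I_(n a)) (j : 'I_(n b)) (X : 'M[R]_(d, Ntot d n)) : R :=
  kappa D a b i j * fnorm2 (Rpos X a i *m rotm D a b i j - Rpos X b j) +
  tau D a b i j * fnorm2 (Rpos X a i *m trv D a b i j + tpos X a i - tpos X b j).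

Definition Fterm {R : realType} {d A : nat} {n : 'I_A -> nat} (rho : R -> R)
    (D : pgo_data R d A n) (a b : 'I_A) (i : 'I_(n a)) (j : 'I_(n b))
    (X : 'M[R]_(d, Ntot d n)) : R :=
  if a == b then qf D a b i j X / 2 else rho (qf D a b i j X) / 2.

Definition Fobj {R : realType} {d A : nat} {n : 'I_A -> nat} (rho : R -> R)
    (D : pgo_data R d A n) (X : 'M[R]_(d, Ntot d n)) : R :=
  \sum_(a < A) \sum_(e in edges D a a) Fterm rho D a a e.1 e.2 X +
  \sum_(a < A) \sum_(b < A | b != a) \sum_(e in edges D a b) Fterm rho D a b e.1 e.2 X.

Definition omega {R : realType} {d A : nat} {n : 'I_A -> nat} (rho' : R -> R)
    (D : pgo_data R d A n) (a b : 'I_A) (i : 'I_(n a)) (j : 'I_(n b))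
    (Xk : 'M[R]_(d, Ntot d n)) : R :=
  if a == b then 1 else rho' (qf D a b i j Xk).

Definition pdec {R : realType} {d A : nat} {n : 'I_A -> nat} (D : pgo_data R d A n)
    (a b : 'I_A) (i : 'I_(n a)) (j : 'I_(n b)) (X : 'M[R]_(d, Ntot d n)) : R :=
  2 * (kappa D a b i j * fnorm2 (Rpos X a i) + kappa D a b i j * fnorm2 (Rpos X b j)
       + tau D a b i j * fnorm2 (Rpos X a i *m trv D a b i j + tpos X a i)
       + tau D a b i j * fnorm2 (tpos X b j)).

Definition Eterm {R : realType} {d A : nat} {n : 'I_A -> nat} (rho rho' : R -> R)
    (D : pgo_data R d A n) (a b : 'I_A) (i : 'I_(n a)) (j : 'I_(n b))
    (X Xk : 'M[R]_(d, Ntot d n)) : R :=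
  1 / 2 * omega rho' D a b i j Xk * pdec D a b i j (X - Xk)
  + minner (grad (Fterm rho D a b i j) Xk) (X - Xk)
  + Fterm rho D a b i j Xk.

Definition Gsur {R : realType} {d A : nat} {n : 'I_A -> nat} (rho rho' : R -> R)
    (D : pgo_data R d A n) (xi : R) (X Xk : 'M[R]_(d, Ntot d n)) : R :=
  \sum_(a < A) \sum_(e in edges D a a) Fterm rho D a a e.1 e.2 X +
  \sum_(a < A) \sum_(b < A | b != a) \sum_(e in edges D a b)
      Eterm rho rho' D a b e.1 e.2 X Xk
  + xi / 2 * fnorm2 (X - Xk).

Definition is_Mk {R : realType} {d A : nat} {n : 'I_A -> nat} (rho' : R -> R)
    (D : pgo_data R d A n) (Xk : 'M[R]_(d, Ntot d n)) (M : 'M[R]_(Ntot d n)) : Prop :=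
  forall Y : 'M[R]_(d, Ntot d n),
    mnorm2 M Y =
      \sum_(a < A) \sum_(e in edges D a a) qf D a a e.1 e.2 Y +
      \sum_(a < A) \sum_(b < A | b != a) \sum_(e in edges D a b)
          omega rho' D a b e.1 e.2 Xk * qf D a b e.1 e.2 Y.

(* Main.v *)
Require Import Defs.
From HB Require Import structures.
From mathcomp Require Import all_boot all_order all_algebra.
From mathcomp Require Import all_classical all_reals all_analysis.
From mathcomp Require Import ring lra.
Import Order.TTheory GRing.Theory Num.Theory.
Import numFieldNormedType.Exports.
Local Open Scope classical_set_scope.
Local Open Scope ring_scope.
Lemma poly2_derive (R : realType) (c0 b c : R) :
  is_derive (0:R) (1:R) (fun s : R => c0 + s * b + s ^+ 2 * c) b.
Proof.
have -> : (fun s : R => c0 + s * b + s ^+ 2 * c) = (cst c0 + id * cst b + (id * id) * cst c).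
  by apply/funext => s /=; rewrite expr2.
apply: is_derive_eq.
by rewrite /= !(scaler0, scale0r, add0r, addr0) /GRing.scale /= mulr1.
Qed.

Lemma chain_derive (R : realType) (f g : R -> R) (x df dg : R) :
  is_derive x (1:R) f df -> is_derive (f x) (1:R) g dg -> is_derive x (1:R) (g \o f) (dg * df).
Proof.
move=> Hf Hg; split.
  apply/derivable1_diffP; apply: differentiable_comp; apply/derivable1_diffP.
    exact: ex_derive.
  exact: ex_derive.
rewrite -derive1E derive1_comp; first by rewrite !derive1E !derive_val.
  exact: ex_derive.
exact: ex_derive.
Qed.

Lemma dnbhs_right (R : realType) (f : R -> R) (l : R) : (f @ 0^' --> l) -> (f @ 0^'+ --> l).
Proof.
move=> H; apply: (cvg_trans _ H); apply: cvg_app => P /=; rewrite /at_right /dnbhs /within /=.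
move=> HP. rewrite /nbhs /= in HP *. apply: filterS HP => x Px x0; apply: Px; exact: lt0r_neq0.
Qed.

Lemma rho0 (R : realType) (rho rho' : R -> R) : loss_kernel rho rho' -> rho 0 = 0.
Proof. by case=> _ [H _]; apply/(H 0 (lexx 0)). Qed.

Lemma rho_tangent (R : realType) (rho rho' : R -> R) : loss_kernel rho rho' ->
  forall x y : R, 0 <= x -> 0 <= y -> rho y <= rho x + rho' x * (y - x).
Proof.
move=> LK; have r0 := @rho0 _ _ _ LK.
have [Hp [_ [Hd [Hr [_ [Hc [_ [H1 _]]]]]]]] := LK.
move=> x y; rewrite le_eqVlt => /orP[/eqP<-|xpos] y0.
  rewrite H1 mul1r subr0 r0 add0r.
  move: y0; rewrite le_eqVlt => /orP[/eqP<-|ypos]; first by rewrite r0.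
  suff : (rho y - rho 0) / y <= rho' 0.
    by rewrite H1 r0 subr0 ler_pdivrMr // mul1r.
  apply: (cvgr_to_ge Hr); near=> h.
  have h0 : 0 < h by near: h; exact: nbhs_right_gt.
  have hy : h < y by near: h; exact: nbhs_right_lt.
  have Hh : h / y * rho y <= rho h.
    have := Hc y 0 (h / y) (ltW ypos) (lexx 0) (divr_ge0 (ltW h0) (ltW ypos)) _.
    rewrite r0 mulr0 !addr0 divfK ?gt_eqF //; apply.
    by rewrite ler_pdivrMr // mul1r ltW.
  rewrite r0 !subr0 [X in _ <= X]mulrC ler_pdivlMr //.
  by apply: le_trans Hh; rewrite mulrC mulrA mulrAC.
have dg : is_derive (0:R) (1:R) (fun h => rho (x + h * (y - x))) (rho' x * (y - x)).
  have := @chain_derive R (fun h => x + h * (y - x)) rho 0 (y - x) (rho' x) _ _.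
  apply.
  - have := @poly2_derive R x (y - x) 0.
    have -> : (fun s : R => x + s * (y - x) + s ^+ 2 * 0) = (fun h => x + h * (y - x)).
      by apply/funext => s; rewrite mulr0 addr0.
    done.
  - by rewrite /= mul0r addr0; exact: Hd.
have Hq : (fun h : R => h^-1 *: (((fun h : R => rho (x + h * (y - x))) \o shift 0) (h *: 1) - rho (x + 0 * (y - x)))) @ 0^' --> 'D_1 (fun h : R => rho (x + h * (y - x))) 0 := @ex_derive _ _ _ _ _ _ _ dg.
have := @dnbhs_right R _ _ Hq.
rewrite derive_val => Hlim.
suff : rho y - rho x <= rho' x * (y - x) by rewrite lerBlDl.
apply: (cvgr_to_ge Hlim); near=> h.
have h0 : 0 < h by near: h; exact: nbhs_right_gt.
have h1 : h < 1 by near: h; exact: nbhs_right_lt.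
have := Hc y x h y0 (ltW xpos) (ltW h0) (ltW h1).
rewrite /comp /shift /= mul0r addr0.
rewrite addr0.
have -> : x + h%:A * (y - x) = h * y + (1 - h) * x.
  rewrite /GRing.scale /= mulr1; ring.
rewrite /GRing.scale /= ler_pdivlMl // mulrBr mulrBl mul1r => Hh.
lra.
Unshelve. all: by end_near.
Qed.

Lemma rho_le (R : realType) (rho rho' : R -> R) : loss_kernel rho rho' ->
  forall z : R, 0 <= z -> 0 <= rho z <= z.
Proof.
move=> LK z z0; have := @rho_tangent R rho rho' LK 0 z (lexx 0) z0.
have [Hp [_ [_ [_ [_ [_ [_ [H1 _]]]]]]]] := LK.
by rewrite (@rho0 _ _ _ LK) H1 add0r mul1r subr0 => ->; rewrite Hp.
Qed.

Lemma rho_poly_derive (R : realType) (rho rho' : R -> R) : loss_kernel rho rho' ->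
  forall c0 b c : R, 0 <= c0 -> 0 <= c -> (c0 = 0 -> b = 0) ->
  is_derive (0:R) (1:R) (fun s => rho (c0 + s * b + s ^+ 2 * c)) (rho' c0 * b).
Proof.
move=> LK c0 b c; rewrite le_eqVlt => /orP[/eqP<-|c0pos] c_ge0 Hb.
  rewrite Hb // mulr0.
  have Hq : (fun h : R => h^-1 *: (((fun s => rho (0 + s * 0 + s ^+ 2 * c)) \o shift 0) (h *: 1) - rho (0 + 0 * 0 + 0 ^+ 2 * c))) @ 0^' --> (0:R).
    apply/cvgr0Pnorm_lt => e e0; near=> h.
    have hb : `|h| < e / (c + 1) by near: h; apply: dnbhs0_lt; rewrite divr_gt0 // ltr_wpDl.
    rewrite /comp /shift /= !mulr0 !add0r !addr0 expr0n /= mul0r (@rho0 _ _ _ LK) subr0.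
    rewrite /GRing.scale /= mulr1.
    have z0 : 0 <= h ^+ 2 * c by rewrite mulr_ge0 // sqr_ge0.
    have /andP[r1 r2] := @rho_le R rho rho' LK _ z0.
    rewrite normrM (ger0_norm r1) normfV.
    have [->|hn0] := eqVneq h 0; first by rewrite normr0 invr0 mul0r.
    have hp : 0 < `|h| by rewrite normr_gt0.
    apply: (le_lt_trans (y := `|h| * c)).
      rewrite ler_pdivrMl // mulrA -expr2 -normrX ger0_norm ?sqr_ge0 //.
    apply: (le_lt_trans (y := `|h| * (c + 1))).
      by rewrite ler_pM2l // lerDl.
    by rewrite -ltr_pdivlMr // ltr_wpDl.
  split.
    by apply/cvg_ex; exists 0.
  by apply: cvg_lim.
apply: (@chain_derive R (fun s => c0 + s * b + s ^+ 2 * c) rho 0 b (rho' c0) (@poly2_derive R c0 b c)).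
rewrite /= mul0r addr0 expr0n /= mul0r addr0.
have [_ [_ [Hd _]]] := LK; exact: Hd.
Unshelve. all: by end_near.
Qed.


Section MX.
Context {R : realType}.

Lemma minnerC {m k : nat} (X Y : 'M[R]_(m, k)) : minner X Y = minner Y X.
Proof. by rewrite /minner -mxtrace_tr trmx_mul trmxK. Qed.

Lemma minnerDl {m k : nat} (X Y Z : 'M[R]_(m, k)) : minner (X + Y) Z = minner X Z + minner Y Z.
Proof. by rewrite /minner mulmxDl mxtraceD. Qed.

Lemma minnerZl {m k : nat} (a : R) (X Z : 'M[R]_(m, k)) : minner (a *: X) Z = a * minner X Z.
Proof. by rewrite /minner -scalemxAl mxtraceZ. Qed.

Lemma minnerDr {m k : nat} (X Y Z : 'M[R]_(m, k)) : minner Z (X + Y) = minner Z X + minner Z Y.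
Proof. by rewrite minnerC minnerDl !(minnerC Z). Qed.

Lemma minnerZr {m k : nat} (a : R) (X Z : 'M[R]_(m, k)) : minner Z (a *: X) = a * minner Z X.
Proof. by rewrite minnerC minnerZl minnerC. Qed.

Lemma minnerNl {m k : nat} (X Z : 'M[R]_(m, k)) : minner (- X) Z = - minner X Z.
Proof. by rewrite -scaleN1r minnerZl mulN1r. Qed.

Lemma minnerNr {m k : nat} (X Z : 'M[R]_(m, k)) : minner Z (- X) = - minner Z X.
Proof. by rewrite -scaleN1r minnerZr mulN1r. Qed.

Lemma minner0l {m k : nat} (Z : 'M[R]_(m, k)) : minner 0 Z = 0.
Proof. by rewrite /minner mul0mx mxtrace0. Qed.

Lemma minner0r {m k : nat} (Z : 'M[R]_(m, k)) : minner Z 0 = 0.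
Proof. by rewrite minnerC minner0l. Qed.

Lemma minner_suml {m k : nat} (I : Type) (r : seq I) (P : pred I) (F : I -> 'M[R]_(m, k)) Z :
  minner (\sum_(i <- r | P i) F i) Z = \sum_(i <- r | P i) minner (F i) Z.
Proof.
apply: (big_morph (fun X => minner X Z)); [by move=> x y; rewrite minnerDl| exact: minner0l].
Qed.

Lemma fnorm2_ge0 {m k : nat} (X : 'M[R]_(m, k)) : 0 <= fnorm2 X.
Proof.
rewrite /fnorm2 /minner /mxtrace; apply: sumr_ge0 => i _; rewrite mxE.
by apply: sumr_ge0 => j _; rewrite mxE -expr2 sqr_ge0.
Qed.

Lemma fnorm2_eq0 {m k : nat} (X : 'M[R]_(m, k)) : fnorm2 X = 0 -> X = 0.
Proof.
rewrite /fnorm2 /minner /mxtrace => /eqP; rewrite psumr_eq0 => [/allP H|i _].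
  apply/matrixP => i j; rewrite mxE.
  have /implyP := H i (mem_index_enum _); rewrite /= => /(_ isT).
  rewrite mxE psumr_eq0 => [/allP H2|l _]; last by rewrite mxE -expr2 sqr_ge0.
  have /implyP := H2 j (mem_index_enum _); rewrite /= mxE -expr2 sqrf_eq0 => /(_ isT).
  by move/eqP.
by rewrite mxE; apply: sumr_ge0 => j _; rewrite mxE -expr2 sqr_ge0.
Qed.

Lemma fnorm2_mul {m k l : nat} (X : 'M[R]_(m, k)) (P : 'M[R]_(k, l)) :
  fnorm2 (X *m P) = mnorm2 (P *m P^T) X.
Proof. by rewrite /fnorm2 /minner /mnorm2 trmx_mul !mulmxA. Qed.

Lemma mnorm2D {m k : nat} (M1 M2 : 'M[R]_k) (Y : 'M[R]_(m, k)) :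
  mnorm2 (M1 + M2) Y = mnorm2 M1 Y + mnorm2 M2 Y.
Proof. by rewrite /mnorm2 mulmxDr mulmxDl mxtraceD. Qed.

Lemma mnorm2Z {m k : nat} (a : R) (M : 'M[R]_k) (Y : 'M[R]_(m, k)) :
  mnorm2 (a *: M) Y = a * mnorm2 M Y.
Proof. by rewrite /mnorm2 -scalemxAr -scalemxAl mxtraceZ. Qed.

Lemma mnorm2_0 {m k : nat} (Y : 'M[R]_(m, k)) : mnorm2 0 Y = 0.
Proof. by rewrite /mnorm2 mulmx0 mul0mx mxtrace0. Qed.

Lemma mnorm2B {m k : nat} (M1 M2 : 'M[R]_k) (Y : 'M[R]_(m, k)) :
  mnorm2 (M1 - M2) Y = mnorm2 M1 Y - mnorm2 M2 Y.
Proof. by rewrite mnorm2D -scaleN1r mnorm2Z mulN1r. Qed.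

Lemma mnorm2_sum {m k : nat} (I : Type) (r : seq I) (P : pred I) (F : I -> 'M[R]_k) (Y : 'M[R]_(m,k)) :
  mnorm2 (\sum_(i <- r | P i) F i) Y = \sum_(i <- r | P i) mnorm2 (F i) Y.
Proof.
apply: (big_morph (fun M => mnorm2 M Y)); [by move=> x y; rewrite mnorm2D| exact: mnorm2_0].
Qed.

Lemma mnorm2_1 {m k : nat} (Y : 'M[R]_(m, k)) : mnorm2 1%:M Y = fnorm2 Y.
Proof. by rewrite /mnorm2 mulmx1. Qed.

Lemma mnorm2_expand {m k : nat} (H : 'M[R]_k) (X Y : 'M[R]_(m, k)) : H^T = H ->
  mnorm2 H (X + Y) = mnorm2 H X + 2 * minner (X *m H) Y + mnorm2 H Y.
Proof.
move=> HT; rewrite /mnorm2 /minner linearD /= !mulmxDl !mulmxDr !mxtraceD.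
have -> : \tr (Y *m H *m X^T) = \tr (X *m H *m Y^T).
  by rewrite -mxtrace_tr !trmx_mul trmxK HT mulmxA.
by rewrite mulr2n mulrDl !mul1r; ring.
Qed.

Lemma mnorm2_scale {m k : nat} (H : 'M[R]_k) (s : R) (Y : 'M[R]_(m, k)) :
  mnorm2 H (s *: Y) = s ^+ 2 * mnorm2 H Y.
Proof. by rewrite /mnorm2 linearZ /= -!scalemxAl -scalemxAr !mxtraceZ mulrA expr2. Qed.

End MX.


Definition selm {R : realType} {N k : nat} (f : 'I_k -> 'I_N) : 'M[R]_(N, k) :=
  \matrix_(u, c) (u == f c)%:R.

Lemma mul_selm {R : realType} {m N k : nat} (X : 'M[R]_(m, N)) (f : 'I_k -> 'I_N) :
  X *m selm f = \matrix_(r, c) X r (f c).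
Proof.
apply/matrixP => r c; rewrite !mxE (bigD1 (f c)) //= mxE eqxx mulr1 big1 ?addr0 //.
by move=> u /negbTE; rewrite mxE => ->; rewrite mulr0.
Qed.

Section Problem.
Context {R : realType} {d A : nat} {n : 'I_A -> nat}.
Local Notation N := (Ntot d n).
Local Notation RK a v := (@tagnat.Rank A (bdim d n) a v).
Local Notation S1 a := (@tagnat.sig1 A (bdim d n) a).

Definition SR (a : 'I_A) (i : 'I_(n a)) : 'M[R]_(N, d) :=
  selm (fun c => RK a (rshift (n a) (mxvec_index i c))).
Definition St (a : 'I_A) (i : 'I_(n a)) : 'M[R]_(N, 1) :=
  selm (fun _ => RK a (lshift (n a * d) i)).

Lemma Rpos_sel (X : 'M[R]_(d, N)) a i : Rpos X a i = X *m SR a i.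
Proof. by rewrite /SR mul_selm; apply/matrixP => r c; rewrite !mxE. Qed.

Lemma tpos_sel (X : 'M[R]_(d, N)) a i : tpos X a i = X *m St a i.
Proof. by rewrite /St mul_selm; apply/matrixP => r c; rewrite !mxE. Qed.

Definition supp (a : 'I_A) {k : nat} (P : 'M[R]_(N, k)) :=
  forall (u : 'I_N) l, S1 u != a -> P u l = 0.

Lemma supp_SR a i : supp a (SR a i).
Proof.
move=> u l H; rewrite mxE; case: eqP => [e|]; last by []; by rewrite e tagnat.Rank1K eqxx in H.
Qed.

Lemma supp_St a i : supp a (St a i).
Proof.
move=> u l H; rewrite mxE; case: eqP => [e|]; last by []; by rewrite e tagnat.Rank1K eqxx in H.
Qed.

Lemma suppD a k (P Q : 'M[R]_(N, k)) : supp a P -> supp a Q -> supp a (P + Q).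
Proof. by move=> HP HQ u l H; rewrite mxE HP // HQ // addr0. Qed.

Lemma suppN a k (P : 'M[R]_(N, k)) : supp a P -> supp a (- P).
Proof. by move=> HP u l H; rewrite mxE HP // oppr0. Qed.

Lemma suppM a k l (P : 'M[R]_(N, k)) (M : 'M[R]_(k, l)) : supp a P -> supp a (P *m M).
Proof. by move=> HP u c H; rewrite mxE big1 // => v _; rewrite HP // mul0r. Qed.

Definition bdiag (M : 'M[R]_N) := forall u w : 'I_N, S1 u != S1 w -> M u w = 0.

Lemma bdiag_sq a k (P : 'M[R]_(N, k)) : supp a P -> bdiag (P *m P^T).
Proof.
move=> HP u w H; rewrite mxE big1 // => l _; rewrite mxE.
have [ua|ua] := eqVneq (S1 u) a; last by rewrite (HP u) // mul0r.
by rewrite (HP w) ?mulr0 // -ua eq_sym.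
Qed.

Lemma bdiagD M1 M2 : bdiag M1 -> bdiag M2 -> bdiag (M1 + M2).
Proof. by move=> H1 H2 u w H; rewrite mxE H1 // H2 // addr0. Qed.

Lemma bdiagZ c M : bdiag M -> bdiag (c *: M).
Proof. by move=> H1 u w H; rewrite mxE H1 // mulr0. Qed.

Lemma bdiagN M : bdiag M -> bdiag (- M).
Proof. by move=> H1 u w H; rewrite mxE H1 // oppr0. Qed.

Lemma bdiag0 : bdiag 0.
Proof. by move=> u w _; rewrite mxE. Qed.

Lemma bdiag1 : bdiag 1%:M.
Proof. by move=> u w H; rewrite mxE; case: eqP => // uw; rewrite uw eqxx in H. Qed.

Lemma bdiag_sum (I : Type) (r : seq I) (P : pred I) (F : I -> 'M[R]_N) :
  (forall i, P i -> bdiag (F i)) -> bdiag (\sum_(i <- r | P i) F i).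
Proof.
move=> H; elim: r => [|x r IH]; first by rewrite big_nil; exact: bdiag0.
rewrite big_cons; case: ifP => Px //; exact: bdiagD (H _ Px) IH.
Qed.

Lemma bdiag_mxdiag (M : 'M[R]_N) : bdiag M -> M = mxdiag (fun a => submxblock M a a).
Proof.
move=> H; apply/mxblockP => i j; rewrite /mxdiag mxblockK.
case: eqVneq => [<-|ne]; first by rewrite conform_mx_id.
apply/matrixP => k l; rewrite !mxE; apply: H; by rewrite !tagnat.Rank1K.
Qed.

Lemma minner_blk (G Y : 'M[R]_(d, N)) :
  minner G Y = \sum_(a < A) minner (blk G a) (blk Y a).
Proof.
rewrite /minner -{1}(submxrowK G) -{1}(submxrowK Y) tr_mxrow mul_mxrow_mxcol.
by rewrite raddf_sum.
Qed.

Lemma mnorm2_blk (G : forall a, 'M[R]_(bdim d n a)) (Y : 'M[R]_(d, N)) :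
  mnorm2 (mxdiag G) Y = \sum_(a < A) mnorm2 (G a) (blk Y a).
Proof.
rewrite /mnorm2 -{1}(submxrowK Y) -{2}(submxrowK Y) mul_mxrow_mxdiag tr_mxrow mul_mxrow_mxcol.
by rewrite raddf_sum.
Qed.

Definition wsq (w : R) {k : nat} (P : 'M[R]_(N, k)) : 'M[R]_N := w *: (P *m P^T).

Lemma mnorm2_wsq w k (P : 'M[R]_(N, k)) (X : 'M[R]_(d, N)) :
  mnorm2 (wsq w P) X = w * fnorm2 (X *m P).
Proof. by rewrite mnorm2Z fnorm2_mul. Qed.

Lemma wsq_tr w k (P : 'M[R]_(N, k)) : (wsq w P)^T = wsq w P.
Proof. by rewrite /wsq linearZ /= trmx_mul trmxK. Qed.

Lemma minner_wsq w k (P : 'M[R]_(N, k)) (X E : 'M[R]_(d, N)) :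
  minner (X *m wsq w P) E = w * minner (X *m P) (E *m P).
Proof. by rewrite /wsq -scalemxAr minnerZl /minner trmx_mul !mulmxA. Qed.

Lemma wsq_psd w k (P : 'M[R]_(N, k)) : 0 <= w -> psd (wsq w P).
Proof.
move=> w0; split; first exact: wsq_tr.
move=> v; rewrite /wsq -scalemxAr -scalemxAl mxE mulr_ge0 //.
have := fnorm2_ge0 (v *m P); rewrite /fnorm2 /minner trmx_mul !mulmxA.
by rewrite /mxtrace big_ord1.
Qed.

Lemma bdiag_wsq a w k (P : 'M[R]_(N, k)) : supp a P -> bdiag (wsq w P).
Proof. by move=> H; apply: bdiagZ; exact: bdiag_sq H. Qed.

Variable D : pgo_data R d A n.

Definition P1 a b i j := SR a i *m rotm D a b i j - SR b j.
Definition P2 a b i j := SR a i *m trv D a b i j + St a i - St b j.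
Definition Uv a b i j := SR a i *m trv D a b i j + St a i.
Definition Hq a b i j :=
  wsq (kappa D a b i j) (P1 a b i j) + wsq (tau D a b i j) (P2 a b i j).
Definition Hp a b i j :=
  2 *: (wsq (kappa D a b i j) (SR a i) + wsq (kappa D a b i j) (SR b j)
        + wsq (tau D a b i j) (Uv a b i j) + wsq (tau D a b i j) (St b j)).

Lemma qf_Hq a b i j X : qf D a b i j X = mnorm2 (Hq a b i j) X.
Proof.
rewrite /qf /Hq /P1 /P2 !Rpos_sel !tpos_sel mnorm2D !mnorm2_wsq.
by rewrite !mulmxBr !mulmxDr !mulmxA.
Qed.

Lemma pdec_Hp a b i j X : pdec D a b i j X = mnorm2 (Hp a b i j) X.
Proof.
rewrite /pdec /Hp /Uv mnorm2Z !mnorm2D !mnorm2_wsq !Rpos_sel !tpos_sel.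
by rewrite !mulmxDr !mulmxA.
Qed.

Lemma Hq_tr a b i j : (Hq a b i j)^T = Hq a b i j.
Proof. by rewrite /Hq linearD /= !wsq_tr. Qed.

Lemma Hp_tr a b i j : (Hp a b i j)^T = Hp a b i j.
Proof. by rewrite /Hp linearZ /= !linearD /= !wsq_tr. Qed.

Lemma qposD (M1 M2 : 'M[R]_N) : (forall v : 'rV_N, 0 <= (v *m M1 *m v^T) 0 0) ->
  (forall v : 'rV_N, 0 <= (v *m M2 *m v^T) 0 0) ->
  forall v : 'rV_N, 0 <= (v *m (M1 + M2) *m v^T) 0 0.
Proof. by move=> H1 H2 v; rewrite mulmxDr mulmxDl mxE addr_ge0. Qed.

Lemma qposZ (c : R) (M : 'M[R]_N) : 0 <= c -> (forall v : 'rV_N, 0 <= (v *m M *m v^T) 0 0) ->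
  forall v : 'rV_N, 0 <= (v *m (c *: M) *m v^T) 0 0.
Proof. by move=> c0 H v; rewrite -scalemxAr -scalemxAl mxE mulr_ge0. Qed.

Lemma qpos_wsq w k (P : 'M[R]_(N, k)) : 0 <= w -> forall v : 'rV_N, 0 <= (v *m wsq w P *m v^T) 0 0.
Proof. by move=> w0; case: (@wsq_psd w k P w0). Qed.

Lemma Hq_psd a b i j : 0 <= kappa D a b i j -> 0 <= tau D a b i j -> psd (Hq a b i j).
Proof.
move=> k0 t0; split; first exact: Hq_tr.
by apply: qposD; apply: qpos_wsq.
Qed.

Lemma Hp_psd a b i j : 0 <= kappa D a b i j -> 0 <= tau D a b i j -> psd (Hp a b i j).
Proof.
move=> k0 t0; split; first exact: Hp_tr.
apply: qposZ => //; repeat apply: qposD; by apply: qpos_wsq.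
Qed.

Lemma bdiag_Hq a i j : bdiag (Hq a a i j).
Proof.
apply: bdiagD; apply: (@bdiag_wsq a).
  by apply: suppD; [apply: suppM; apply: supp_SR| apply: suppN; apply: supp_SR].
apply: suppD; last by apply: suppN; apply: supp_St.
by apply: suppD; [apply: suppM; apply: supp_SR| apply: supp_St].
Qed.

Lemma bdiag_Hp a b i j : bdiag (Hp a b i j).
Proof.
apply: bdiagZ; apply: bdiagD; [apply: bdiagD; [apply: bdiagD|]|].
- by apply: (@bdiag_wsq a); apply: supp_SR.
- by apply: (@bdiag_wsq b); apply: supp_SR.
- apply: (@bdiag_wsq a); apply: suppD; [apply: suppM; apply: supp_SR| apply: supp_St].
- by apply: (@bdiag_wsq b); apply: supp_St.
Qed.

Lemma Hq_zero a b i j (X E : 'M[R]_(d, N)) :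
  0 <= kappa D a b i j -> 0 <= tau D a b i j -> mnorm2 (Hq a b i j) X = 0 ->
  minner (X *m Hq a b i j) E = 0.
Proof.
move=> k0 t0; rewrite /Hq (mulmxDr X (wsq _ _) (wsq _ _)) minnerDl !minner_wsq mnorm2D !mnorm2_wsq.
have f1 := fnorm2_ge0 (X *m P1 a b i j); have f2 := fnorm2_ge0 (X *m P2 a b i j).
move/eqP; rewrite paddr_eq0 ?mulr_ge0 // => /andP[/eqP e1 /eqP e2].
have z : forall (w : R) k (Q : 'M[R]_(d, k)) (Q' : 'M[R]_(d, k)),
    w * fnorm2 Q = 0 -> w * minner Q Q' = 0.
  move=> w k Q Q' /eqP; rewrite mulf_eq0 => /orP[/eqP->|/eqP/fnorm2_eq0->].
    by rewrite mul0r.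
  by rewrite minner0l mulr0.
by rewrite (z _ _ _ _ e1) (z _ _ _ _ e2) addr0.
Qed.

End Problem.


Section Sums.
Context {R : realType} {d A : nat} {n : 'I_A -> nat} (D : pgo_data R d A n).

Definition S1 {V : zmodType} (F : forall a : 'I_A, 'I_(n a) * 'I_(n a) -> V) : V :=
  \sum_(a < A) \sum_(e in edges D a a) F a e.
Definition S2 {V : zmodType} (F : forall a b : 'I_A, 'I_(n a) * 'I_(n b) -> V) : V :=
  \sum_(a < A) \sum_(b < A | b != a) \sum_(e in edges D a b) F a b e.

Lemma S1_morph {V W : zmodType} (f : V -> W) F :
  (forall x y, f (x + y) = f x + f y) -> f 0 = 0 ->
  f (S1 F) = S1 (fun a e => f (F a e)).
Proof.
move=> fD f0; rewrite /S1 (big_morph f fD f0); apply: eq_bigr => a _.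
by rewrite (big_morph f fD f0).
Qed.

Lemma S2_morph {V W : zmodType} (f : V -> W) F :
  (forall x y, f (x + y) = f x + f y) -> f 0 = 0 ->
  f (S2 F) = S2 (fun a b e => f (F a b e)).
Proof.
move=> fD f0; rewrite /S2 (big_morph f fD f0); apply: eq_bigr => a _.
rewrite (big_morph f fD f0); apply: eq_bigr => b _.
by rewrite (big_morph f fD f0).
Qed.

Lemma eq_S1 {V : zmodType} (F G : forall a : 'I_A, 'I_(n a) * 'I_(n a) -> V) :
  (forall a e, e \in edges D a a -> F a e = G a e) -> S1 F = S1 G.
Proof. by move=> H; apply: eq_bigr => a _; apply: eq_bigr => e; apply: H. Qed.

Lemma eq_S2 {V : zmodType} (F G : forall a b : 'I_A, 'I_(n a) * 'I_(n b) -> V) :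
  (forall a b e, b != a -> e \in edges D a b -> F a b e = G a b e) -> S2 F = S2 G.
Proof.
move=> H; apply: eq_bigr => a _; apply: eq_bigr => b ba; apply: eq_bigr => e; exact: H.
Qed.

Lemma S1D {V : zmodType} (F G : forall a : 'I_A, 'I_(n a) * 'I_(n a) -> V) :
  S1 (fun a e => F a e + G a e) = S1 F + S1 G.
Proof. by rewrite /S1 -big_split; apply: eq_bigr => a _; rewrite big_split. Qed.

Lemma S2D {V : zmodType} (F G : forall a b : 'I_A, 'I_(n a) * 'I_(n b) -> V) :
  S2 (fun a b e => F a b e + G a b e) = S2 F + S2 G.
Proof.
rewrite /S2 -big_split; apply: eq_bigr => a _; rewrite -big_split.
by apply: eq_bigr => b _; rewrite big_split.
Qed.

Lemma S1M (c : R) F : S1 (fun a e => c * F a e) = c * S1 F.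
Proof. by rewrite (@S1_morph R R ( *%R c)) // => *; rewrite ?mulrDr ?mulr0. Qed.

Lemma S2M (c : R) F : S2 (fun a b e => c * F a b e) = c * S2 F.
Proof. by rewrite (@S2_morph R R ( *%R c)) // => *; rewrite ?mulrDr ?mulr0. Qed.

Lemma ler_S1 (F G : forall a : 'I_A, 'I_(n a) * 'I_(n a) -> R) :
  (forall a e, e \in edges D a a -> F a e <= G a e) -> S1 F <= S1 G.
Proof. by move=> H; apply: ler_sum => a _; apply: ler_sum => e; apply: H. Qed.

Lemma ler_S2 (F G : forall a b : 'I_A, 'I_(n a) * 'I_(n b) -> R) :
  (forall a b e, b != a -> e \in edges D a b -> F a b e <= G a b e) -> S2 F <= S2 G.
Proof.
move=> H; apply: ler_sum => a _; apply: ler_sum => b ba; apply: ler_sum => e; exact: H.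
Qed.

Lemma S1_ge0 (F : forall a : 'I_A, 'I_(n a) * 'I_(n a) -> R) :
  (forall a e, e \in edges D a a -> 0 <= F a e) -> 0 <= S1 F.
Proof. by move=> H; apply: sumr_ge0 => a _; apply: sumr_ge0 => e; apply: H. Qed.

Lemma S2_ge0 (F : forall a b : 'I_A, 'I_(n a) * 'I_(n b) -> R) :
  (forall a b e, b != a -> e \in edges D a b -> 0 <= F a b e) -> 0 <= S2 F.
Proof.
move=> H; apply: sumr_ge0 => a _; apply: sumr_ge0 => b ba; apply: sumr_ge0 => e; exact: H.
Qed.

Lemma bdiag_S1 F : (forall a e, bdiag (F a e)) -> @bdiag R d A n (S1 F).
Proof. by move=> H; apply: bdiag_sum => a _; apply: bdiag_sum => e _. Qed.

Lemma bdiag_S2 F : (forall a b e, bdiag (F a b e)) -> @bdiag R d A n (S2 F).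
Proof.
by move=> H; apply: bdiag_sum => a _; apply: bdiag_sum => b _; apply: bdiag_sum => e _.
Qed.

End Sums.


Lemma is_derive_big {R : realType} (I : Type) (r : seq I) (P : pred I)
  (h : I -> R -> R) (dh : I -> R) :
  (forall i, P i -> is_derive (0:R) (1:R) (h i) (dh i)) ->
  is_derive (0:R) (1:R) (fun s => \sum_(i <- r | P i) h i s) (\sum_(i <- r | P i) dh i).
Proof.
move=> H; elim: r => [|x r IH].
  have -> : (fun s : R => \sum_(i <- [::] | P i) h i s) = cst 0.
    by apply/funext => s; rewrite big_nil.
  by rewrite big_nil; exact: is_derive_cst.
case Px: (P x).
  have -> : (fun s : R => \sum_(i <- x :: r | P i) h i s) =
            h x + (fun s => \sum_(i <- r | P i) h i s).
    by apply/funext => s; rewrite big_cons Px.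
  rewrite big_cons Px; exact: is_deriveD (H x Px) IH.
have -> : (fun s : R => \sum_(i <- x :: r | P i) h i s) =
          (fun s => \sum_(i <- r | P i) h i s).
  by apply/funext => s; rewrite big_cons Px.
by rewrite big_cons Px.
Qed.

Lemma is_derive_half {R : realType} (f : R -> R) (df : R) :
  is_derive (0:R) (1:R) f df -> is_derive (0:R) (1:R) (fun s => f s / 2) (df / 2).
Proof.
move=> H.
have -> : (fun s => f s / 2) = (f * cst (2^-1)) by apply/funext.
apply: is_derive_eq.
by rewrite /cst /= /GRing.scale /= mulr0 add0r mulrC.
Qed.

Section Grad.
Context {R : realType} {m k : nat}.

Definition hasgrad (f : 'M[R]_(m, k) -> R) (X G : 'M[R]_(m, k)) :=
  forall E, is_derive (0:R) (1:R) (fun s => f (X + s *: E)) (minner G E).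

Lemma minner_delta (G : 'M[R]_(m, k)) i j : minner G (delta_mx i j) = G i j.
Proof.
rewrite /minner trmx_delta /mxtrace (bigD1 i) //= big1 ?addr0.
  rewrite mxE (bigD1 j) //= big1 ?addr0; first by rewrite mxE !eqxx mulr1.
  by move=> l /negbTE lj; rewrite mxE lj mulr0.
move=> l /negbTE li; rewrite mxE big1 // => u _; rewrite mxE.
by rewrite li andbF mulr0.
Qed.

Lemma grad_of f X G : hasgrad f X G -> grad f X = G.
Proof.
move=> H; apply/matrixP => i j; rewrite mxE derive1E.
by rewrite (@derive_val _ _ _ _ _ _ _ (H (delta_mx i j))) minner_delta.
Qed.

Lemma hasgrad_poly f X G :
  (forall E, exists c0 c, forall s, f (X + s *: E) = c0 + s * minner G E + s ^+ 2 * c) ->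
  hasgrad f X G.
Proof.
move=> H E; have [c0 [c Hs]] := H E.
have -> : (fun s => f (X + s *: E)) = (fun s => c0 + s * minner G E + s ^+ 2 * c).
  by apply/funext.
exact: poly2_derive.
Qed.

Lemma hasgradD f g X F G : hasgrad f X F -> hasgrad g X G ->
  hasgrad (fun Y => f Y + g Y) X (F + G).
Proof.
move=> Hf Hg E; rewrite minnerDl.
exact: is_deriveD (Hf E) (Hg E).
Qed.

Lemma hasgrad_big (I : Type) (r : seq I) (P : pred I) (f : I -> 'M[R]_(m, k) -> R) X G :
  (forall i, P i -> hasgrad (f i) X (G i)) ->
  hasgrad (fun Y => \sum_(i <- r | P i) f i Y) X (\sum_(i <- r | P i) G i).
Proof.
move=> H E; rewrite minner_suml.
apply: (@is_derive_big R I r P (fun i s => f i (X + s *: E)) (fun i => minner (G i) E)) => i Pi; exact: H.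
Qed.

End Grad.


Section Edge.
Context {R : realType} {d A : nat} {n : 'I_A -> nat} (D : pgo_data R d A n).
Context (rho rho' : R -> R) (LK : loss_kernel rho rho').
Local Notation N := (Ntot d n).

Lemma qf_ge0 a b i j (X : 'M[R]_(d, N)) : 0 <= kappa D a b i j -> 0 <= tau D a b i j ->
  0 <= qf D a b i j X.
Proof. by move=> k0 t0; rewrite /qf addr_ge0 // mulr_ge0 // fnorm2_ge0. Qed.

Lemma pdec_ge0 a b i j (X : 'M[R]_(d, N)) : 0 <= kappa D a b i j -> 0 <= tau D a b i j ->
  0 <= pdec D a b i j X.
Proof. by move=> k0 t0; rewrite /pdec mulr_ge0 // !addr_ge0 // mulr_ge0 // fnorm2_ge0. Qed.

Lemma fnorm2_rot {p : nat} (M : 'M[R]_(p, d)) (Q : 'M[R]_d) : rotation Q ->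
  fnorm2 (M *m Q) = fnorm2 M.
Proof.
case=> HQ _; have QQ : Q *m Q^T = 1%:M by apply: mulmx1C.
by rewrite fnorm2_mul /mnorm2 QQ mulmx1.
Qed.

Lemma fnorm2_sub_le {p q : nat} (u w : 'M[R]_(p, q)) :
  fnorm2 (u - w) <= 2 * fnorm2 u + 2 * fnorm2 w.
Proof.
have h1 : fnorm2 (u - w) = fnorm2 u - 2 * minner u w + fnorm2 w.
  by rewrite /fnorm2 !(minnerDl, minnerDr, minnerNl, minnerNr) (minnerC w u); ring.
have h2 : fnorm2 (u + w) = fnorm2 u + 2 * minner u w + fnorm2 w.
  by rewrite /fnorm2 !(minnerDl, minnerDr) (minnerC w u); ring.
have := fnorm2_ge0 (u + w); lra.
Qed.

Lemma qf_le_pdec a b i j (X : 'M[R]_(d, N)) : rotation (rotm D a b i j) ->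
  0 <= kappa D a b i j -> 0 <= tau D a b i j -> qf D a b i j X <= pdec D a b i j X.
Proof.
move=> rot k0 t0; rewrite /qf /pdec.
have h1 := fnorm2_sub_le (Rpos X a i *m rotm D a b i j) (Rpos X b j).
rewrite fnorm2_rot // in h1.
have h2 := fnorm2_sub_le (Rpos X a i *m trv D a b i j + tpos X a i) (tpos X b j).
have := ler_wpM2l k0 h1; have := ler_wpM2l t0 h2.
rewrite !mulrDr; lra.
Qed.

Lemma hasgrad_Faa a i j (Xk : 'M[R]_(d, N)) :
  hasgrad (Fterm rho D a a i j) Xk (Xk *m Hq D a a i j).
Proof.
apply: hasgrad_poly => E.
exists (mnorm2 (Hq D a a i j) Xk / 2), (mnorm2 (Hq D a a i j) E / 2) => s.
rewrite /Fterm eqxx qf_Hq mnorm2_expand ?Hq_tr // mnorm2_scale minnerZr.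
by field.
Qed.

Lemma hasgrad_Fab a b i j (Xk : 'M[R]_(d, N)) : a != b ->
  0 <= kappa D a b i j -> 0 <= tau D a b i j ->
  hasgrad (Fterm rho D a b i j) Xk (rho' (qf D a b i j Xk) *: (Xk *m Hq D a b i j)).
Proof.
move=> ab k0 t0 E.
set c0 := mnorm2 (Hq D a b i j) Xk.
set m := minner (Xk *m Hq D a b i j) E.
set c := mnorm2 (Hq D a b i j) E.
have -> : (fun s => Fterm rho D a b i j (Xk + s *: E)) =
          (fun s => rho (c0 + s * (2 * m) + s ^+ 2 * c) / 2).
  apply/funext => s; rewrite /Fterm (negbTE ab) qf_Hq mnorm2_expand ?Hq_tr //.
  by rewrite mnorm2_scale minnerZr /c0 /m /c; congr (rho _ / 2); ring.
apply: is_derive_eq.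
  apply: is_derive_half; apply: (@rho_poly_derive R rho rho' LK).
  - rewrite /c0 -qf_Hq; exact: qf_ge0.
  - rewrite /c -qf_Hq; exact: qf_ge0.
  - by move=> /(@Hq_zero R d A n D a b i j Xk E k0 t0); rewrite -/m => ->; rewrite mulr0.
by rewrite minnerZl qf_Hq -/c0 -/m; by field.
Qed.

Lemma Fab_le_E a b i j (X Xk : 'M[R]_(d, N)) : a != b -> rotation (rotm D a b i j) ->
  0 <= kappa D a b i j -> 0 <= tau D a b i j ->
  Fterm rho D a b i j X <= Eterm rho rho' D a b i j X Xk.
Proof.
move=> ab rot k0 t0.
rewrite /Eterm (grad_of _ _ _ (@hasgrad_Fab a b i j Xk ab k0 t0)) /omega /Fterm (negbTE ab) minnerZl.
have qX : qf D a b i j X = qf D a b i j Xk + 2 * minner (Xk *m Hq D a b i j) (X - Xk)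
                           + qf D a b i j (X - Xk).
  by rewrite !qf_Hq -mnorm2_expand ?Hq_tr //; rewrite addrC subrK.
have t := @rho_tangent R rho rho' LK (qf D a b i j Xk) (qf D a b i j X)
            (@qf_ge0 a b i j Xk k0 t0) (@qf_ge0 a b i j X k0 t0).
have [_ [_ [_ [_ [_ [_ [Hd' _]]]]]]] := LK.
have [r0 _] := Hd' _ (@qf_ge0 a b i j Xk k0 t0).
have := ler_wpM2l r0 (@qf_le_pdec a b i j (X - Xk) rot k0 t0).
have e : qf D a b i j X - qf D a b i j Xk =
   2 * minner (Xk *m Hq D a b i j) (X - Xk) + qf D a b i j (X - Xk) by rewrite qX; ring.
rewrite e in t; move: t.
set r := rho' _; set m := minner _ _.
set q := qf D a b i j (X - Xk); set p := pdec D a b i j (X - Xk).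
move=> t H; rewrite mulrDr in t; lra.
Qed.

End Edge.


Lemma vform {R : realType} {d N : nat} (i0 : 'I_d) (M : 'M[R]_N) (v : 'rV[R]_N) :
  (v *m M *m v^T) 0 0 = mnorm2 M ((delta_mx i0 (0 : 'I_1) : 'cV[R]_d) *m v).
Proof.
rewrite /mnorm2 trmx_mul !mulmxA -(mulmxA (delta_mx i0 0)) -(mulmxA (delta_mx i0 0)).
set W := v *m M *m v^T.
rewrite (mxtrace_mulC (delta_mx i0 0 *m W) (delta_mx i0 0)^T) mulmxA trmx_delta mul_delta_mx.
rewrite /mxtrace big_ord1 [in RHS]mxE big_ord1 mxE.
by rewrite [delta_mx _ _ _ _]mxE /= mul1r.
Qed.


Lemma psd_of {R : realType} {d N : nat} (i0 : 'I_d) (M : 'M[R]_N) :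
  M^T = M -> (forall Y : 'M[R]_(d, N), 0 <= mnorm2 M Y) -> psd M.
Proof. by move=> MT H; split => // v; rewrite (vform i0). Qed.

Lemma selT_mul {R : realType} {m N k : nat} (f : 'I_k -> 'I_N) (Y : 'M[R]_(N, m)) :
  (selm f)^T *m Y = \matrix_(c, r) Y (f c) r.
Proof. by apply: trmx_inj; rewrite trmx_mul trmxK mul_selm; apply/matrixP => i j; rewrite !mxE. Qed.

Lemma submx_sel {R : realType} {A : nat} {p_ : 'I_A -> nat} (M : 'M[R]_(\sum_i p_ i)) a :
  submxblock M a a = (selm (@tagnat.Rank A p_ a))^T *m M *m selm (@tagnat.Rank A p_ a).
Proof. by rewrite -mulmxA mul_selm selT_mul; apply/matrixP => i j; rewrite !mxE. Qed.

Lemma psd_submx {R : realType} {A : nat} {p_ : 'I_A -> nat} (M : 'M[R]_(\sum_i p_ i)) a :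
  psd M -> psd (submxblock M a a).
Proof.
case=> MT H; rewrite submx_sel; split.
  by rewrite !trmx_mul trmxK MT mulmxA.
move=> v; have := H (v *m (selm (@tagnat.Rank A p_ a))^T).
by rewrite trmx_mul trmxK !mulmxA.
Qed.

Lemma mnorm2_0r {R : realType} {m k : nat} (M : 'M[R]_k) : mnorm2 M (0 : 'M[R]_(m, k)) = 0.
Proof. by rewrite /mnorm2 !mul0mx mxtrace0. Qed.

Local Close Scope classical_set_scope.
Theorem proposition3 (R : realType) (d A : nat) (n : 'I_A -> nat)
    (D : pgo_data R d A n) (rho rho' : R -> R) (xi : R) :
  (2 <= d)%N ->
  (forall a : 'I_A, (0 < n a)%N) ->
  (forall (a b : 'I_A) (i : 'I_(n a)) (j : 'I_(n b)), (i, j) \in edges D a b ->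
     rotation (rotm D a b i j) /\ 0 <= kappa D a b i j /\ 0 <= tau D a b i j) ->
  loss_kernel rho rho' ->
  0 <= xi ->
  exists Gam : 'M[R]_(Ntot d n), psd Gam /\
  exists Gk : 'M[R]_(d, Ntot d n) -> forall a : 'I_A, 'M[R]_(bdim d n a),
  forall Xk : 'M[R]_(d, Ntot d n), feasible Xk ->
    (forall a : 'I_A, psd (Gk Xk a)) /\
    (* (a) *)
    (forall X : 'M[R]_(d, Ntot d n),
       Gsur rho rho' D xi X Xk =
         \sum_(a < A) (1 / 2 * mnorm2 (Gk Xk a) (blk X a - blk Xk a)
                       + minner (blk (grad (Fobj rho D) Xk) a) (blk X a - blk Xk a))
         + Fobj rho D Xk) /\
    (* (b) *)
    (forall X : 'M[R]_(d, Ntot d n),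
       Gsur rho rho' D xi X Xk =
         1 / 2 * mnorm2 (mxdiag (Gk Xk)) (X - Xk)
         + minner (grad (Fobj rho D) Xk) (X - Xk) + Fobj rho D Xk) /\
    (forall X : 'M[R]_(d, Ntot d n), Fobj rho D X <= Gsur rho rho' D xi X Xk) /\
    Gsur rho rho' D xi Xk Xk = Fobj rho D Xk /\
    (* (c) *)
    (forall Mk : 'M[R]_(Ntot d n), Mk^T = Mk -> is_Mk rho' D Xk Mk ->
       psd (mxdiag (Gk Xk) - Mk)) /\
    (* (d) *)
    psd (Gam - mxdiag (Gk Xk)).
Proof.
move=> d2 npos Hedge LK xi0.
have d0 : (0 < d)%N by apply: leq_trans d2.
pose i0 : 'I_d := Ordinal d0.
have HE : forall (a b : 'I_A) (e : 'I_(n a) * 'I_(n b)), e \in edges D a b ->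
    [/\ rotation (rotm D a b e.1 e.2), 0 <= kappa D a b e.1 e.2 & 0 <= tau D a b e.1 e.2].
  by move=> a b [i j] He; have [? [? ?]] := Hedge a b i j He; split.
have [_ [_ [_ [_ [_ [_ [Hd' _]]]]]]] := LK.
have om : forall (Xk : 'M[R]_(d, Ntot d n)) a b (e : 'I_(n a) * 'I_(n b)), b != a ->
    e \in edges D a b -> 0 <= omega rho' D a b e.1 e.2 Xk <= 1.
  move=> Xk a b e ba He; have [_ k0 t0] := HE a b e He.
  rewrite /omega eq_sym (negbTE ba).
  by have [-> ->] := Hd' _ (qf_ge0 D _ _ _ _ Xk k0 t0).
pose Gkf (Xk : 'M[R]_(d, Ntot d n)) : 'M[R]_(Ntot d n) :=
  S1 D (fun a e => Hq D a a e.1 e.2)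
  + S2 D (fun a b e => omega rho' D a b e.1 e.2 Xk *: Hp D a b e.1 e.2) + xi *: 1%:M.
pose Gam : 'M[R]_(Ntot d n) :=
  S1 D (fun a e => Hq D a a e.1 e.2) + S2 D (fun a b e => Hp D a b e.1 e.2) + xi *: 1%:M.
have S1mn : forall (F : forall a : 'I_A, 'I_(n a) * 'I_(n a) -> 'M[R]_(Ntot d n)) (Y : 'M[R]_(d, Ntot d n)),
    mnorm2 (S1 D F) Y = S1 D (fun a e => mnorm2 (F a e) Y).
  move=> F Y; exact: (S1_morph D (fun M => mnorm2 M Y) F (fun x y => mnorm2D x y Y) (mnorm2_0 Y)).
have S2mn : forall (F : forall a b : 'I_A, 'I_(n a) * 'I_(n b) -> 'M[R]_(Ntot d n)) (Y : 'M[R]_(d, Ntot d n)),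
    mnorm2 (S2 D F) Y = S2 D (fun a b e => mnorm2 (F a b e) Y).
  move=> F Y; exact: (S2_morph D (fun M => mnorm2 M Y) F (fun x y => mnorm2D x y Y) (mnorm2_0 Y)).
have mnG : forall Xk (Y : 'M[R]_(d, Ntot d n)), mnorm2 (Gkf Xk) Y =
    S1 D (fun a e => qf D a a e.1 e.2 Y)
    + S2 D (fun a b e => omega rho' D a b e.1 e.2 Xk * pdec D a b e.1 e.2 Y) + xi * fnorm2 Y.
  move=> Xk Y; rewrite /Gkf !mnorm2D S1mn S2mn mnorm2Z mnorm2_1; congr (_ + _ + _).
    by apply: eq_S1 => a e _; rewrite qf_Hq.
  by apply: eq_S2 => a b e _ _; rewrite mnorm2Z pdec_Hp.
have mnGam : forall (Y : 'M[R]_(d, Ntot d n)), mnorm2 Gam Y =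
    S1 D (fun a e => qf D a a e.1 e.2 Y)
    + S2 D (fun a b e => pdec D a b e.1 e.2 Y) + xi * fnorm2 Y.
  move=> Y; rewrite /Gam !mnorm2D S1mn S2mn mnorm2Z mnorm2_1; congr (_ + _ + _).
    by apply: eq_S1 => a e _; rewrite qf_Hq.
  by apply: eq_S2 => a b e _ _; rewrite pdec_Hp.
have trS1 : forall (F : forall a : 'I_A, 'I_(n a) * 'I_(n a) -> 'M[R]_(Ntot d n)),
    (S1 D F)^T = S1 D (fun a e => (F a e)^T).
  move=> F; apply: (S1_morph D (@trmx R (Ntot d n) (Ntot d n)) F) => [x y|]; [exact: linearD | exact: trmx0].
have trS2 : forall (F : forall a b : 'I_A, 'I_(n a) * 'I_(n b) -> 'M[R]_(Ntot d n)),
    (S2 D F)^T = S2 D (fun a b e => (F a b e)^T).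
  move=> F; apply: (S2_morph D (@trmx R (Ntot d n) (Ntot d n)) F) => [x y|]; [exact: linearD | exact: trmx0].
have GkT : forall Xk, (Gkf Xk)^T = Gkf Xk.
  move=> Xk; rewrite /Gkf !linearD /= linearZ /= trmx1 trS1 trS2; congr (_ + _ + _).
    by apply: eq_S1 => a e _; rewrite Hq_tr.
  by apply: eq_S2 => a b e _ _; rewrite linearZ /= Hp_tr.
have GamT : Gam^T = Gam.
  rewrite /Gam !linearD /= linearZ /= trmx1 trS1 trS2; congr (_ + _ + _).
    by apply: eq_S1 => a e _; rewrite Hq_tr.
  by apply: eq_S2 => a b e _ _; rewrite Hp_tr.
pose Gfull (Xk : 'M[R]_(d, Ntot d n)) : 'M[R]_(d, Ntot d n) :=
  S1 D (fun a e => Xk *m Hq D a a e.1 e.2)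
  + S2 D (fun a b e => rho' (qf D a b e.1 e.2 Xk) *: (Xk *m Hq D a b e.1 e.2)).
have hgF : forall Xk, hasgrad (Fobj rho D) Xk (Gfull Xk).
  move=> Xk; apply: hasgradD.
    apply: hasgrad_big => a _; apply: hasgrad_big => e _; exact: hasgrad_Faa.
  apply: hasgrad_big => a _; apply: hasgrad_big => b ba; apply: hasgrad_big => e He.
  have [_ k0 t0] := HE a b e He; apply: hasgrad_Fab => //; by rewrite eq_sym.
have FobjS : forall X, Fobj rho D X = S1 D (fun a e => Fterm rho D a a e.1 e.2 X)
    + S2 D (fun a b e => Fterm rho D a b e.1 e.2 X) by [].
have GsurS : forall X Xk, Gsur rho rho' D xi X Xk =
    S1 D (fun a e => Fterm rho D a a e.1 e.2 X)
    + S2 D (fun a b e => Eterm rho rho' D a b e.1 e.2 X Xk) + xi / 2 * fnorm2 (X - Xk) by [].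
exists Gam; split.
  apply: (psd_of i0); first exact: GamT.
  move=> Y; rewrite mnGam; apply: addr_ge0; [apply: addr_ge0|].
  - apply: S1_ge0 => a e He; have [_ k0 t0] := HE a a e He; exact: qf_ge0.
  - apply: S2_ge0 => a b e _ He; have [_ k0 t0] := HE a b e He; exact: pdec_ge0.
  - by rewrite mulr_ge0 // fnorm2_ge0.
exists (fun Xk a => submxblock (Gkf Xk) a a) => Xk _.
have bd : bdiag (Gkf Xk).
  apply: bdiagD; [apply: bdiagD|].
  - apply: bdiag_S1 => a e; exact: bdiag_Hq.
  - apply: bdiag_S2 => a b e; apply: bdiagZ; exact: bdiag_Hp.
  - apply: bdiagZ; exact: bdiag1.
have Gd : mxdiag (fun a => submxblock (Gkf Xk) a a) = Gkf Xk := esym (bdiag_mxdiag _ bd).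
have psdG : psd (Gkf Xk).
  apply: (psd_of i0); first exact: GkT.
  move=> Y; rewrite mnG; apply: addr_ge0; [apply: addr_ge0|].
  - apply: S1_ge0 => a e He; have [_ k0 t0] := HE a a e He; exact: qf_ge0.
  - apply: S2_ge0 => a b e ba He; have [_ k0 t0] := HE a b e He.
    have := om Xk a b e ba He; case/andP => o0 _.
    by rewrite mulr_ge0 // pdec_ge0.
  - by rewrite mulr_ge0 // fnorm2_ge0.
have Ggr : grad (Fobj rho D) Xk = Gfull Xk := grad_of _ _ _ (hgF Xk).
have Hb : forall Wd, Gsur rho rho' D xi (Xk + Wd) Xk =
    1 / 2 * mnorm2 (Gkf Xk) Wd + minner (Gfull Xk) Wd + Fobj rho D Xk.
  move=> Wd; rewrite GsurS [Xk + Wd]addrC addrK.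
  rewrite (eq_S1 D _ (fun a e => 1 / 2 * qf D a a e.1 e.2 Wd
      + minner (Xk *m Hq D a a e.1 e.2) Wd + Fterm rho D a a e.1 e.2 Xk)); last first.
    move=> a e _; rewrite /Fterm eqxx !qf_Hq addrC mnorm2_expand ?Hq_tr //; by field.
  rewrite (eq_S2 D _ (fun a b e => 1 / 2 * (omega rho' D a b e.1 e.2 Xk * pdec D a b e.1 e.2 Wd)
      + minner (rho' (qf D a b e.1 e.2 Xk) *: (Xk *m Hq D a b e.1 e.2)) Wd
      + Fterm rho D a b e.1 e.2 Xk)); last first.
    move=> a b e ba He; have [_ k0 t0] := HE a b e He.
    have ab : a != b by rewrite eq_sym.
    rewrite /Eterm addrK (grad_of _ _ _ (hasgrad_Fab D rho rho' LK _ _ _ _ Xk ab k0 t0)).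
    by rewrite [in RHS]mulrA.
  rewrite !S1D !S2D S1M S2M mnG FobjS /Gfull minnerDl.
  rewrite (S1_morph D (fun G => minner G Wd) _ (fun x y => minnerDl x y Wd) (minner0l Wd)).
  rewrite (S2_morph D (fun G => minner G Wd) _ (fun x y => minnerDl x y Wd) (minner0l Wd)).
  lra.
have Hb' : forall X, Gsur rho rho' D xi X Xk =
    1 / 2 * mnorm2 (Gkf Xk) (X - Xk) + minner (Gfull Xk) (X - Xk) + Fobj rho D Xk.
  by move=> X; rewrite -Hb [Xk + (X - Xk)]addrC subrK.
split; first by move=> a; exact: psd_submx.
split.
  move=> X; rewrite Hb' -{1}Gd mnorm2_blk minner_blk Ggr mulr_sumr -big_split /=.
  congr (_ + _); apply: eq_bigr => a _; by rewrite /blk submxrowB.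
split; first by move=> X; rewrite Hb' Gd Ggr.
split.
  move=> X; rewrite FobjS GsurS.
  have : S2 D (fun a b e => Fterm rho D a b e.1 e.2 X)
         <= S2 D (fun a b e => Eterm rho rho' D a b e.1 e.2 X Xk).
    apply: ler_S2 => a b e ba He; have [rot k0 t0] := HE a b e He.
    by apply: Fab_le_E => //; rewrite eq_sym.
  have := mulr_ge0 (divr_ge0 xi0 (ler0n _ 2)) (fnorm2_ge0 (X - Xk)).
  lra.
split.
  by have := Hb 0; rewrite addr0 mnorm2_0r minner0r mulr0 !add0r.
split.
  move=> Mk MkT HM; rewrite Gd; apply: (psd_of i0).
    by rewrite linearB /= GkT MkT.
  move=> Y.
  have HM' : mnorm2 Mk Y = S1 D (fun a e => qf D a a e.1 e.2 Y)
     + S2 D (fun a b e => omega rho' D a b e.1 e.2 Xk * qf D a b e.1 e.2 Y) := HM Y.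
  rewrite mnorm2B HM' mnG subr_ge0.
  have : S2 D (fun a b e => omega rho' D a b e.1 e.2 Xk * qf D a b e.1 e.2 Y)
         <= S2 D (fun a b e => omega rho' D a b e.1 e.2 Xk * pdec D a b e.1 e.2 Y).
    apply: ler_S2 => a b e ba He; have [rot k0 t0] := HE a b e He.
    have := om Xk a b e ba He; case/andP => o0 _.
    by apply: ler_wpM2l => //; exact: qf_le_pdec.
  have := mulr_ge0 xi0 (fnorm2_ge0 Y).
  lra.
rewrite /= Gd; apply: (psd_of i0).
  by rewrite linearB /= GamT GkT.
move=> Y; rewrite mnorm2B mnGam mnG subr_ge0.
have : S2 D (fun a b e => omega rho' D a b e.1 e.2 Xk * pdec D a b e.1 e.2 Y)
       <= S2 D (fun a b e => pdec D a b e.1 e.2 Y).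
  apply: ler_S2 => a b e ba He; have [rot k0 t0] := HE a b e He.
  have := om Xk a b e ba He; case/andP => _ o1.
  by apply: ler_piMl => //; exact: pdec_ge0.
lra.
Qed.
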